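(* Let $\mathcal{H}$ be a hypertree, $T$ a host tree of $\mathcal{H}$, and $B$ a basic set of $\mathcal{H}$. Then the number of edges $e$ of $T$ with $I_\mathcal{H}(e)=B$ equals $\alpha_B-1$.
   Context: A hypergraph $\mathcal{H}$ has a finite vertex set $V(\mathcal{H})$ and a finite family of nonempty subsets (edges). A host tree is a tree on $V(\mathcal{H})$ in which every edge induces a connected subgraph; a hypertree is a hypergraph with a host tree. For $V'\subseteq V(\mathcal{H})$, $I_\mathcal{H}(V')$ is the intersection of all edges containing $V'$, or $V(\mathcal{H})$ if none does; for a tree edge $e=xy$, $I_\mathcal{H}(e)=I_\mathcal{H}(\{x,y\})$. For $A\subseteq V(\mathcal{H})$, $\overline{\mathcal{H}_A}$ is the hypergraph on $V(\mathcal{H})$ whose edges are the edges of $\mathcal{H}$ not containing $A$. The 2-section of a hypergraph is the graph on its vertices where two distinct vertices are adjacent iff some edge contains both. For a basic set $B$, $A(B)$ is the set of connected components of the 2-section of $\overline{\mathcal{H}_B}$ containing at least one vertex of $B$, and $\alpha_B=|A(B)|$. A union of sets is connected if the intersection graph of the sets is connected. $Comp(\mathcal{H})$ is the hypergraph without repeated edges on $V(\mathcal{H})$ whose edges are $V(\mathcal{H})$, all singletons, and all proper subsets obtainable from edges of $\mathcal{H}$ by repeated nonempty intersections and connected unions; a basic set is an edge of $Comp(\mathcal{H})$ with more than one vertex that is not a connected union of strictly smaller edges of $Comp(\mathcal{H})$. *)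

(* Defs.v *)
From mathcomp Require Import all_boot all_order.
Set Implicit Arguments. Unset Strict Implicit. Unset Printing Implicit Defensive.

Section Hypertrees.
Variable V : finType.
(* A hypergraph on vertex set V is a finite family (a seq, repetitions
   allowed) of nonempty subsets of V. *)
Definition hypergraph (H : seq {set V}) : Prop := forall X, X \in H -> X != set0.

Definition tedges (t : rel V) : {set {set V}} :=
  [set [set x; y] | x in V, y in V & t x y].

Definition is_tree (t : rel V) : Prop :=
  symmetric t /\ irreflexive t /\ (forall x y, connect t x y) /\
  #|tedges t| = #|V|.-1.

Definition induces_connected (t : rel V) (X : {set V}) : Prop :=
  forall x y, x \in X -> y \in X ->
    connect [rel u v | [&& t u v, u \in X & v \in X]] x y.

Definition host_tree (H : seq {set V}) (t : rel V) : Prop :=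
  is_tree t /\ forall X, X \in H -> induces_connected t X.

(* I_H(V') : intersection of all edges containing V' (V if none). *)
Definition I_H (H : seq {set V}) (V' : {set V}) : {set V} :=
  \bigcap_(X <- H | V' \subset X) X.

Definition Hbar (H : seq {set V}) (A : {set V}) : seq {set V} :=
  filter (fun X : {set V} => ~~ (A \subset X)) H.

Definition two_section (H : seq {set V}) : rel V :=
  fun x y : V => (x != y) && has (fun X : {set V} => (x \in X) && (y \in X)) H.

Definition component (r : rel V) (x : V) : {set V} := [set y | connect r x y].

Definition AB (H : seq {set V}) (B : {set V}) : {set {set V}} :=
  [set component (two_section (Hbar H B)) x | x in B].
Definition alpha (H : seq {set V}) (B : {set V}) : nat := #|AB H B|.

Definition conn_family (F : {set {set V}}) : Prop :=
  forall X Y, X \in F -> Y \in F ->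
    connect [rel P Q | [&& P \in F, Q \in F & P :&: Q != set0]] X Y.

Inductive obtainable (H : seq {set V}) : {set V} -> Prop :=
| ob_edge X : X \in H -> obtainable H X
| ob_cap X Y : obtainable H X -> obtainable H Y -> X :&: Y != set0 ->
    obtainable H (X :&: Y)
| ob_cup (F : {set {set V}}) : F != set0 ->
    (forall X, X \in F -> obtainable H X) -> conn_family F ->
    obtainable H (\bigcup_(X in F) X).

Definition comp_edge (H : seq {set V}) (X : {set V}) : Prop :=
  X = [set: V] \/ (exists x, X = [set x]) \/
  (obtainable H X /\ X \proper [set: V]).

Definition basic_set (H : seq {set V}) (B : {set V}) : Prop :=
  comp_edge H B /\ 1 < #|B| /\
  ~ (exists F : {set {set V}},
       [/\ F != set0, (forall X, X \in F -> comp_edge H X /\ X \proper B),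
           conn_family F & \bigcup_(X in F) X = B]).
End Hypertrees.

(* Main.v *)
Require Import Defs.
From mathcomp Require Import all_boot all_order.
From mathcomp Require Import zify.
Set Implicit Arguments. Unset Strict Implicit. Unset Printing Implicit Defensive.

Lemma connect_closed (T : finType) (e : rel T) (P : T -> Prop) a b :
  P a -> (forall u v, P u -> e u v -> P v) -> connect e a b -> P b.
Proof.
move=> Pa step /connectP [p pth ->]; elim: p a Pa pth => [|c p IH] a Pa //= /andP [eac pth].
exact: IH (step _ _ Pa eac) pth.
Qed.

Lemma connect_mono (T : finType) (e e' : rel T) a b :
  (forall u v, e u v -> connect e' u v) -> connect e a b -> connect e' a b.
Proof.
move=> h; apply: (connect_closed (P := connect e' a)) => //.
move=> u v au /h; exact: connect_trans au.
Qed.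

Lemma card_imset_ker (T U1 U2 : finType) (f : T -> U1) (g : T -> U2) (W : {set T}) :
  {in W &, forall a b, g a = g b -> f a = f b} -> #|f @: W| <= #|g @: W|.
Proof.
move=> h.
case: (set_0Vmem W) => [-> | [a0 Wa0]]; first by rewrite !imset0 cards0.
pose k (u : U2) := f (odflt a0 [pick z in W | g z == u]).
have -> : f @: W = k @: (g @: W).
  rewrite -imset_comp; apply: eq_in_imset => z Wz /=.
  rewrite /k; case: pickP => [z' /andP [Wz' /eqP gz] | /(_ z)] /=.
    by apply: h.
  by rewrite Wz eqxx.
exact: leq_imset_card.
Qed.

Section Proof.
Variable V : finType.
Implicit Types (r : rel V) (D : {set {set V}}) (Z X Y : {set V}).

Definition crel D : rel V := fun x y => (x != y) && ([set x; y] \in D).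
Lemma crel_sym D : symmetric (crel D).
Proof. by move=> x y; rewrite /crel eq_sym setUC. Qed.

Lemma compE r x y : symmetric r -> (component r x == component r y) = connect r x y.
Proof.
move=> sr; have cs := sym_connect_sym sr.
apply/eqP/idP => [E | cxy].
  have : y \in component r y by rewrite inE connect0.
  by rewrite -E inE.
apply/setP => z; rewrite !inE; exact: same_connect cs _ _ cxy z.
Qed.

Definition kc r Z := #|[set component r x | x in Z]|.

Lemma kc_ker r r' Z : symmetric r -> symmetric r' ->
  {in Z &, forall x y, connect r' x y -> connect r x y} -> kc r Z <= kc r' Z.
Proof.
move=> sr sr' h; apply: card_imset_ker => x y xZ yZ E.
apply/eqP; rewrite compE //; apply: h => //; rewrite -compE //; exact/eqP.
Qed.

Lemma kc_one r Z x : symmetric r -> x \in Z -> (forall w, w \in Z -> connect r x w) -> kc r Z = 1.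
Proof.
move=> sr xZ h; rewrite /kc.
have -> : [set component r x0 | x0 in Z] = [set component r x].
  apply/setP => S; rewrite inE; apply/imsetP/eqP.
    case=> w wZ ->; by apply/eqP; rewrite compE // (sym_connect_sym sr) h.
  by move=> ->; exists x.
by rewrite cards1.
Qed.

Lemma kc_gt0 r Z x : x \in Z -> 0 < kc r Z.
Proof. by move=> xZ; rewrite /kc card_gt0; apply/set0Pn; exists (component r x); apply: imset_f. Qed.

Lemma kc_conn r Z : symmetric r -> kc r Z <= 1 -> forall x y, x \in Z -> y \in Z -> connect r x y.
Proof.
move=> sr k1 x y xZ yZ; rewrite -compE //; apply/eqP.
have := k1; rewrite /kc leq_eqVlt ltnS leqn0 cards_eq0 => /orP [/cards1P [S ES] |].
  have : component r x \in [set S] by rewrite -ES imset_f.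
  have : component r y \in [set S] by rewrite -ES imset_f.
  by rewrite !inE => /eqP -> /eqP ->.
move/eqP => E; have : component r x \in [set component r x0 | x0 in Z] by apply: imset_f.
by rewrite E inE.
Qed.

Lemma path_add D x y z1 z2 : connect (crel ([set x; y] |: D)) z1 z2 ->
  connect (crel D) z1 z2 \/ ((connect (crel D) z1 x \/ connect (crel D) z1 y) /\
                           (connect (crel D) z2 x \/ connect (crel D) z2 y)).
Proof.
have cs := sym_connect_sym (crel_sym D).
apply: (connect_closed (P := fun z2 => connect (crel D) z1 z2 \/ ((connect (crel D) z1 x \/ connect (crel D) z1 y) /\
                           (connect (crel D) z2 x \/ connect (crel D) z2 y)))); first by left; exact: connect0.
move=> u v Pu /andP [uv]; rewrite in_setU1 => /orP [/eqP E | uvD].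
  have ux : (u == x) || (u == y) by rewrite -[_ || _]in_set2 -E set21.
  have vx : (v == x) || (v == y) by rewrite -[_ || _]in_set2 -E set22.
  right; split.
    case: Pu => [c1 | [] //]; case/orP: ux => /eqP Eu; subst u; by [left | right].
  by case/orP: vx => /eqP ->; [left | right]; exact: connect0.
have cuv : connect (crel D) u v by apply: connect1; rewrite /crel uv.
case: Pu => [c1 | [h1 h2]]; first by left; exact: connect_trans c1 cuv.
right; split => //.
have cvu : connect (crel D) v u by rewrite cs.
by case: h2 => h; [left | right]; exact: connect_trans cvu h.
Qed.

Lemma ncomp_add D x y : kc (crel D) setT <= (kc (crel ([set x; y] |: D)) setT).+1.
Proof.
set r := crel D; set r' := crel _.
have sr : symmetric r := crel_sym D.
have cs := sym_connect_sym sr.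
pose W := [set z | ~~ connect r y z].
have sub : [set component r z | z in [set: V]] \subset component r y |: (component r @: W).
  apply/subsetP => S /imsetP [z _ ->]; rewrite inE.
  case: (boolP (connect r y z)) => cyz.
    have -> : component r z = component r y by apply/eqP; rewrite compE // cs.
    by rewrite set11.
  by rewrite imset_f ?orbT // inE.
have h1 := subset_leq_card sub.
have h2 : #|component r y |: (component r @: W)| <= (#|component r @: W|).+1.
  by rewrite cardsU1; case: (_ \notin _).
have h3 : #|component r @: W| <= #|component r' @: W|.
  apply: card_imset_ker => z1 z2 n1 n2 E.
  move: n1 n2; rewrite !inE => n1 n2.
  have : connect r' z1 z2 by rewrite -compE ?E //; exact: crel_sym.
  case/path_add => [c | [[c1|c1] [c2|c2]]]; apply/eqP; rewrite compE //.
  - by apply: connect_trans c1 _; rewrite cs.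
  - by case/negP: n2; rewrite cs.
  - by case/negP: n1; rewrite cs.
  - by case/negP: n1; rewrite cs.
have h4 : #|component r' @: W| <= kc r' setT by apply/subset_leq_card/imsetS/subsetT.
move: h1 h2 h3 h4; rewrite /kc; lia.
Qed.

Lemma ncomp_sub D D' : (forall e, e \in D' -> exists x y, e = [set x; y]) -> D \subset D' ->
  kc (crel D) setT <= kc (crel D') setT + #|D' :\: D|.
Proof.
move=> h2; move Hn : #|D' :\: D| => n; elim: n D Hn => [|n IH] D en sDD'.
  have : D' :\: D == set0 by rewrite -cards_eq0 en.
  rewrite setD_eq0 => sD'D.
  have -> : D = D' by apply/eqP; rewrite eqEsubset sDD'.
  by rewrite addn0.
have [e eD] : exists e, e \in D' :\: D by apply/set0Pn; rewrite -card_gt0 en.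
have := eD; rewrite inE => /andP [eD1 eD'].
have [x [y Ee]] := h2 e eD'.
have E1 : D' :\: (e |: D) = (D' :\: D) :\ e.
  by apply/setP => z; rewrite !inE; case: (z == e); case: (z \in D).
have c1 : #|D' :\: (e |: D)| = n.
  by move: (cardsD1 e (D' :\: D)); rewrite eD en -E1 add1n => -[].
have s1 : e |: D \subset D' by rewrite subUset sub1set eD' sDD'.
have := IH _ c1 s1; have := ncomp_add D x y; rewrite -Ee; move=> a b; apply: leq_trans a _; by rewrite addnS ltnS.
Qed.

Variable t : rel V.
Hypothesis ht : is_tree t.

Let Et := tedges t.

Lemma tsym : symmetric t. Proof. by case: ht. Qed.
Lemma tirr : irreflexive t. Proof. by case: ht => _ []. Qed.
Lemma tconn x y : connect t x y. Proof. by case: ht => _ [_ []]. Qed.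
Lemma tcard : #|Et| = #|V|.-1. Proof. by case: ht => _ [_ []]. Qed.

Lemma Et_mem e : e \in Et -> exists x y, t x y /\ e = [set x; y].
Proof. by case/imset2P => x y _; rewrite inE => txy ->; exists x, y. Qed.

Lemma Et_two e : e \in Et -> exists x y, e = [set x; y].
Proof. by case/Et_mem => x [y [_ ->]]; exists x, y. Qed.

Lemma crel_Et u v : crel Et u v = t u v.
Proof.
apply/idP/idP.
  case/andP => uv /Et_mem [a [b [tab E]]].
  have ua : (u == a) || (u == b) by rewrite -in_set2 -E set21.
  have va : (v == a) || (v == b) by rewrite -in_set2 -E set22.
  case/orP: ua => /eqP eu; case/orP: va => /eqP ev; subst.
  - by rewrite eqxx in uv.
  - done.
  - by rewrite tsym.
  - by rewrite eqxx in uv.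
move=> tuv; rewrite /crel; apply/andP; split.
  by apply/negP => /eqP E; subst; rewrite tirr in tuv.
by apply/imset2P; exists u v => //; rewrite inE.
Qed.

Lemma kc_Et (x0 : V) : kc (crel Et) setT = 1.
Proof.
apply: (kc_one (x := x0)) => //; first exact: crel_sym.
move=> w _; rewrite (eq_connect crel_Et); exact: tconn.
Qed.

Lemma kc_empty : kc (crel set0) setT = #|V|.
Proof.
rewrite /kc -cardsT -(card_imset setT (@set1_inj V)).
have -> : [set component (crel set0) x | x in [set: V]] = [set [set x] | x in [set: V]]; last by [].
apply: eq_imset => x; apply/setP => z; rewrite !inE.
apply/idP/idP => [|/eqP ->]; last exact: connect0.
apply: (connect_closed (P := fun z => z == x)) => // u v _.
by rewrite /crel inE andbF.
Qed.

Lemma forest D : D \subset Et -> kc (crel D) setT + #|D| = #|V|.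
Proof.
move=> sD.
have two : forall e, e \in Et -> exists x y, e = [set x; y] by exact: Et_two.
have h1 := ncomp_sub two (sub0set Et).
have h2 := ncomp_sub (fun e eD => two e (subsetP sD e eD)) (sub0set D).
have h3 := ncomp_sub two sD.
rewrite kc_empty setD0 in h2.
rewrite (cardsDS sD) in h3.
have hD := subset_leq_card sD.
have := tcard.
case: (set_0Vmem [set: V]) => [E0 | [x0 _]].
  have V0 : #|V| = 0 by rewrite -cardsT E0 cards0.
  rewrite V0 /= => cE.
  have -> : #|D| = 0 by apply/eqP; rewrite -leqn0 -cE.
  by rewrite /kc E0 imset0 cards0.
rewrite (kc_Et x0) in h3.
have : 0 < #|V| by rewrite -cardsT card_gt0; apply/set0Pn; exists x0.
lia.
Qed.


Definition restr D Z := [set e in D | e \subset Z].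
Definition EZ Z := restr Et Z.

Lemma FS D Z : D \subset Et -> kc (crel (restr D Z)) Z + #|restr D Z| = #|Z|.
Proof.
move=> sD; set D' := restr D Z.
have sD' : D' \subset Et.
  by apply/subsetP => e; rewrite inE => /andP [/(subsetP sD)].
have hf := forest sD'.
have out : forall z, z \notin Z -> component (crel D') z = [set z].
  move=> z zZ; apply/setP => w; rewrite !inE; apply/idP/idP => [|/eqP ->]; last exact: connect0.
  apply: (connect_closed (P := fun w => w == z)) => // u v /eqP -> /andP [_].
  by rewrite inE subUset sub1set (negbTE zZ) andbF.
have ins : forall x, x \in Z -> component (crel D') x \subset Z.
  move=> x xZ; apply/subsetP => w; rewrite inE.
  apply: (connect_closed (P := fun w => w \in Z)) => // u v _ /andP [_].
  by rewrite inE subUset !sub1set => /andP [_ /andP [_ ->]].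
have E1 : [set component (crel D') x | x in ~: Z] = [set [set x] | x in ~: Z].
  by apply: eq_in_imset => z; rewrite inE => /out.
have dis : [set component (crel D') x | x in ~: Z] :&: [set component (crel D') x | x in Z] = set0.
  apply/setP => S; rewrite !inE E1; apply/negP => /andP [/imsetP [z zZ ->] /imsetP [x xZ Ex]].
  have : z \in Z by apply: (subsetP (ins x xZ)); rewrite -Ex set11.
  by rewrite inE in zZ; move/negP: zZ.
have : kc (crel D') setT = #|~: Z| + kc (crel D') Z.
  rewrite /kc -(setUCr Z) setUC imsetU cardsU dis cards0 subn0 E1 card_imset //.
  exact: set1_inj.
have := cardsC Z; lia.
Qed.

Lemma crel_EZ Z u v : crel (EZ Z) u v = [&& t u v, u \in Z & v \in Z].
Proof.
rewrite /crel inE andbA subUset !sub1set.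
by have := crel_Et u v; rewrite /crel => ->.
Qed.

Lemma ic_connE Z x y : induces_connected t Z -> x \in Z -> y \in Z -> connect (crel (EZ Z)) x y.
Proof. by move=> h xZ yZ; rewrite (eq_connect (crel_EZ Z)); exact: h. Qed.

Lemma kc_EZ Z : kc (crel (EZ Z)) Z + #|EZ Z| = #|Z|.
Proof. exact: FS (subxx _). Qed.

Lemma ic_kc Z x : induces_connected t Z -> x \in Z -> kc (crel (EZ Z)) Z = 1.
Proof.
move=> h xZ; apply: (kc_one (x := x)) => //; first exact: crel_sym.
by move=> w wZ; apply: ic_connE.
Qed.

Lemma kc_ic Z : kc (crel (EZ Z)) Z <= 1 -> induces_connected t Z.
Proof.
move=> k1 x y xZ yZ; rewrite -(eq_connect (crel_EZ Z)).
exact: (kc_conn (crel_sym _) k1).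
Qed.

Lemma ic_cap X Y : induces_connected t X -> induces_connected t Y -> X :&: Y != set0 ->
  induces_connected t (X :&: Y).
Proof.
move=> hX hY /set0Pn [x xI].
have := xI; rewrite inE => /andP [xX xY].
have xU : x \in X :|: Y by rewrite inE xX.
have k1 := ic_kc hX xX; have k2 := ic_kc hY xY.
have k3 := kc_gt0 (crel (EZ (X :|: Y))) xU.
have k4 := kc_gt0 (crel (EZ (X :&: Y))) xI.
have f1 := kc_EZ X; have f2 := kc_EZ Y; have f3 := kc_EZ (X :|: Y); have f4 := kc_EZ (X :&: Y).
have EI : EZ (X :&: Y) = EZ X :&: EZ Y.
  by apply/setP => e; rewrite !inE subsetI; case: (e \in Et).
have sU : EZ X :|: EZ Y \subset EZ (X :|: Y).
  apply/subsetP => e; rewrite !inE => /orP [] /andP [-> s] /=; apply: (subset_trans s).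
    exact: subsetUl.
  exact: subsetUr.
have c1 := subset_leq_card sU.
have c2 := cardsUI (EZ X) (EZ Y).
have c3 := cardsUI X Y.
rewrite -EI in c2.
apply: kc_ic; lia.
Qed.

Lemma cut a b : t a b -> ~~ connect (crel (Et :\ [set a; b])) a b.
Proof.
move=> tab; apply/negP => cab.
set e := [set a; b]; set D := Et :\ e.
have eEt : e \in Et by have := crel_Et a b; rewrite tab => /andP [].
have sD : D \subset Et by exact: subD1set.
have hf := forest sD.
have c1 := cardsD1 e Et; rewrite eEt -/D in c1.
have tc := tcard.
have cs := sym_connect_sym (crel_sym D).
have k1 : kc (crel D) setT = 1.
  apply: (kc_one (x := a)) => //; first exact: crel_sym.
  move=> w _; have : connect (crel Et) a w by rewrite (eq_connect crel_Et); exact: tconn.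
  rewrite -(setD1K eEt) => /path_add [// | [_ [h|h]]].
    by rewrite cs.
  by apply: connect_trans cab _; rewrite cs.
have v0 : 0 < #|V| by rewrite -cardsT card_gt0; apply/set0Pn; exists a.
move: hf tc c1 v0; rewrite k1 /=; move=> h1 h2 h3 h4; rewrite h3 -h1 in h2; move: h2; rewrite add1n /=; lia.
Qed.

Lemma conn_union (R : rel V) (F : {set {set V}}) : conn_family F ->
  (forall Z, Z \in F -> forall u w, u \in Z -> w \in Z -> connect R u w) ->
  forall u w, u \in \bigcup_(X in F) X -> w \in \bigcup_(X in F) X -> connect R u w.
Proof.
move=> cF hZ u w /bigcupP [X XF uX] /bigcupP [Y YF wY].
suff [_ h] : Y \in F /\ (forall w, w \in Y -> connect R u w) by exact: h.
apply: (connect_closed (P := fun Z => Z \in F /\ forall w, w \in Z -> connect R u w) _ _ (cF X Y XF YF)).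
  by split => // w' w'X; exact: hZ uX w'X.
move=> Z Z' [ZF hz] /and3P [_ Z'F /set0Pn [w0]]; rewrite inE => /andP [w0Z w0Z'].
split => // w' w'Z'; apply: connect_trans (hz _ w0Z) _; exact: hZ Z'F _ _ w0Z' w'Z'.
Qed.

Lemma cover_edge (F : {set {set V}}) a b : conn_family F ->
  (forall Z, Z \in F -> induces_connected t Z) -> t a b ->
  a \in \bigcup_(X in F) X -> b \in \bigcup_(X in F) X ->
  exists2 Z, Z \in F & (a \in Z) && (b \in Z).
Proof.
move=> cF hF tab aU bU.
case: (boolP [exists Z in F, (a \in Z) && (b \in Z)]) => [/existsP [Z /andP [ZF h]] | none].
  by exists Z.
have := cut tab; move/negP; case.
apply: (conn_union cF) => // Z ZF u w uZ wZ.
apply: connect_mono (hF Z ZF u w uZ wZ) => p q /and3P [tpq pZ qZ].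
apply: connect1; rewrite /crel; apply/andP; split.
  by apply/negP => /eqP E; subst; rewrite tirr in tpq.
have := crel_Et p q; rewrite tpq => /andP [_ pqE].
rewrite in_setD1 pqE andbT; apply/negP => /eqP E.
have ai : a \in [set p; q] by rewrite E set21.
have bi : b \in [set p; q] by rewrite E set22.
move/existsP: none; apply; exists Z; rewrite ZF /=.
move: ai bi; rewrite !inE => /orP [] /eqP -> /orP [] /eqP ->; by rewrite ?pZ ?qZ.
Qed.


Lemma I_mem (Hs : seq {set V}) (e : {set V}) z :
  (z \in I_H Hs e) = all (fun X => (e \subset X) ==> (z \in X)) Hs.
Proof.
rewrite /I_H; elim: Hs => [|X s IH]; first by rewrite big_nil inE.
rewrite big_cons /=; case: ifP => _ /=; by rewrite ?inE IH.
Qed.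

Lemma I_sub (Hs : seq {set V}) (e X : {set V}) : X \in Hs -> e \subset X -> I_H Hs e \subset X.
Proof.
move=> XH eX; apply/subsetP => z; rewrite I_mem => /allP /(_ X XH).
by rewrite eX.
Qed.

Lemma I_sup (Hs : seq {set V}) (e : {set V}) : e \subset I_H Hs e.
Proof. by apply/subsetP => z ze; rewrite I_mem; apply/allP => X _; apply/implyP => /subsetP; apply. Qed.

Lemma comp_restr D x u w : u \in component (crel D) x -> connect (crel D) u w ->
  connect (crel (restr D (component (crel D) x))) u w.
Proof.
set Z := component _ x => uZ cuw.
suff [_ h] : w \in Z /\ connect (crel (restr D Z)) u w by exact: h.
apply: (connect_closed (P := fun p => p \in Z /\ connect (crel (restr D Z)) u p) _ _ cuw) => //.
move=> p q [pZ cp] /andP [pq pqD].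
have qZ : q \in Z.
  by move: pZ; rewrite !inE => cxp; apply: connect_trans cxp (connect1 _); rewrite /crel pq.
split => //; apply: connect_trans cp (connect1 _).
by rewrite /crel pq inE pqD subUset !sub1set pZ qZ.
Qed.

Variable H : seq {set V}.
Hypothesis hhost : forall X, X \in H -> induces_connected t X.

Lemma OB Y : obtainable H Y -> induces_connected t Y /\
  (forall a b, t a b -> a \in Y -> b \in Y -> I_H H [set a; b] \subset Y).
Proof.
elim => [X XH | X Y0 _ [cX iX] _ [cY iY] ne | F Fne _ IH cF].
- split; first exact: hhost.
  by move=> a b _ aX bX; apply: I_sub XH _; rewrite subUset !sub1set aX bX.
- split; first exact: ic_cap.
  move=> a b tab; rewrite !inE => /andP [aX aY] /andP [bX bY].
  by rewrite subsetI iX ?iY.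
- split.
    move=> x y xU yU; apply: (conn_union cF) => // Z ZF u w uZ wZ.
    apply: connect_mono ((IH Z ZF).1 u w uZ wZ) => p q /and3P [tpq pZ qZ].
    apply: connect1; rewrite /= tpq.
    by rewrite (subsetP (bigcup_sup Z ZF) p pZ) (subsetP (bigcup_sup Z ZF) q qZ).
  move=> a b tab aU bU.
  case: (cover_edge cF (fun Z ZF => (IH Z ZF).1) tab aU bU) => Z ZF /andP [aZ bZ].
  exact: subset_trans ((IH Z ZF).2 a b tab aZ bZ) (bigcup_sup Z ZF).
Qed.

Lemma ts_sym (Hs : seq {set V}) : symmetric (two_section Hs).
Proof.
move=> x y; rewrite /two_section eq_sym; congr andb; apply: eq_has => X /=; exact: andbC.
Qed.


Lemma main_sec B : basic_set H B -> #|[set e in Et | I_H H e == B]| = (alpha H B).-1.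
Proof.
case=> ce [cB _].
have [Bconn Bsub] : induces_connected t B /\
    (forall a b, t a b -> a \in B -> b \in B -> I_H H [set a; b] \subset B).
  case: ce => [-> | [[x Ex] | [ob _]]].
  - split; last by move=> *; apply: subsetT.
    move=> x y _ _; apply: connect_mono (tconn x y) => u v tuv; apply: connect1.
    by rewrite /= tuv !inE.
  - by rewrite Ex cards1 in cB.
  - exact: OB ob.
have [x0 x0B] : exists x, x \in B.
  by apply/set0Pn; rewrite -card_gt0; apply: leq_trans cB.
set hb := Hbar H B.
set Cov := [set e in Et | has (fun X => e \subset X) hb].
set SB := restr Cov B.
set EB := EZ B.
have sCov : Cov \subset Et by apply/subsetP => e; rewrite inE => /andP [].
have U : [set e in Et | I_H H e == B] = EB :\: SB.
  apply/setP => e; rewrite !inE; case eE: (e \in Et); rewrite ?andbF //=.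
  have [a [b [tab Ee]]] := Et_mem eE.
  apply/eqP/idP => [IE | /andP [nh esub]].
    have esub : e \subset B by rewrite -IE I_sup.
    rewrite esub !andbT; apply/negP => /hasP [X Xhb eX].
    move: Xhb; rewrite mem_filter => /andP [nBX XH].
    by move/negP: nBX; apply; rewrite -IE; exact: I_sub XH eX.
  rewrite esub andbT in nh.
  apply/eqP; rewrite eqEsubset; apply/andP; split.
    rewrite Ee; apply: Bsub tab _ _; apply: (subsetP esub); rewrite Ee !inE eqxx ?orbT //.
  apply/subsetP => z zB; rewrite I_mem; apply/allP => X XH; apply/implyP => eX.
  case: (boolP (B \subset X)) => [/subsetP sBX | nBX]; first exact: sBX.
  by case/hasP: nh; exists X => //; rewrite mem_filter nBX XH.
have sSE : SB \subset EB.
  by apply/subsetP => e; rewrite !inE => /andP [/andP [-> _] ->].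
have fEB := kc_EZ B; rewrite (ic_kc Bconn x0B) in fEB.
have fSB := FS B sCov.
have aE : alpha H B = kc (two_section hb) B by [].
have aB : alpha H B <= #|B| by rewrite aE; exact: leq_imset_card.
have tss := ts_sym hb.
have kE : kc (crel SB) B = kc (two_section hb) B.
  apply/anti_leq/andP; split; apply: kc_ker => //; try exact: crel_sym.
    move=> x y xB yB cxy.
    have c1 : connect (crel Cov) x y.
      apply: connect_mono cxy => u v /andP [uv /hasP [X Xhb /andP [uX vX]]].
      have XH : X \in H by move: Xhb; rewrite mem_filter => /andP [].
      apply: connect_mono (hhost XH uX vX) => p q /and3P [tpq pX qX].
      apply: connect1; rewrite /crel; apply/andP; split.
        by apply/negP => /eqP E; subst; rewrite tirr in tpq.
      have := crel_Et p q; rewrite tpq => /andP [_ pqE].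
      rewrite inE pqE /=; apply/hasP; exists X => //.
      by rewrite subUset !sub1set pX qX.
    set Z := component (crel Cov) x.
    have xZ : x \in Z by rewrite inE connect0.
    have yZ : y \in Z by rewrite inE.
    have sC' : restr Cov Z \subset EZ Z.
      by apply/subsetP => e; rewrite !inE => /andP [/andP [-> _] ->].
    have k1 : kc (crel (restr Cov Z)) Z = 1.
      apply: (kc_one (x := x)) => //; first exact: crel_sym.
      by move=> w wZ; apply: comp_restr => //; rewrite inE in wZ.
    have f1 := FS Z sCov; rewrite k1 in f1.
    have f2 := kc_EZ Z.
    have f3 := kc_gt0 (crel (EZ Z)) xZ.
    have EZE : restr Cov Z = EZ Z.
      apply/eqP; rewrite eqEcard sC' /=.
      move: f1 f2 f3; set k := kc _ _; set a := #|restr Cov Z|; set b := #|EZ Z|; set z := #|Z|; lia.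
    have icZ : induces_connected t Z.
      by apply: kc_ic; rewrite -EZE k1.
    have ne : Z :&: B != set0 by apply/set0Pn; exists x; rewrite inE xZ.
    have icZB := ic_cap icZ Bconn ne.
    have xZB : x \in Z :&: B by rewrite inE xZ.
    have yZB : y \in Z :&: B by rewrite inE yZ.
    apply: connect_mono (icZB x y xZB yZB) => p q /and3P [tpq pZB qZB].
    move: pZB qZB; rewrite !in_setI => /andP [pZ pB] /andP [qZ qB].
    apply: connect1; rewrite /crel; apply/andP; split.
      by apply/negP => /eqP E; subst; rewrite tirr in tpq.
    have : [set p; q] \in EZ Z.
      have := crel_EZ Z p q; rewrite tpq pZ qZ /= => /andP [_ //].
    rewrite -EZE !inE => /andP [-> _] /=.
    by rewrite subUset !sub1set pB qB.
  move=> x y xB yB; apply: connect_mono => u v /andP [uv].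
  rewrite !inE => /andP [/andP [_ hc] _]; apply: connect1.
  rewrite /two_section uv /=; apply: sub_has hc => X /subsetP s.
  by rewrite !s // !inE eqxx ?orbT.
rewrite U cardsDS //.
rewrite kE -aE in fSB.
move: fEB fSB aB cB; set a := alpha H B; set b := #|B|; set c := #|SB|; set d := #|EB|; set d2 := #|EZ B|; lia.
Qed.

End Proof.

Theorem mainTheorem14 (V : finType) (H : seq {set V}) (t : rel V)
  (hH : hypergraph H) (ht : host_tree H t) (B : {set V})
  (hB : basic_set H B) :
  #|[set e in tedges t | I_H H e == B]| = (alpha H B).-1.
Proof.
case: ht => ht hhost.
exact: (main_sec ht hhost hB).
Qed.
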